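(* Let $a\geq 3$ and $m\geq 2a^2-a+2$ be integers, and suppose $[C(m,a)]$ is colored with red and blue so that there is no monochromatic solution of $L(m,a)$ in $[C(m,a)]$, with both $a-2$ and $a-1$ red. Then $m-1$, $m-2$, $m-3$ are blue and $a$ is red.
   Context: For integers $m\geq 3$, $a\geq 1$, $L(m,a)$ denotes the equation $x_1+x_2+\cdots+x_{m-1}=a x_m$. For a positive integer $n$, $[n]=\{1,\dots,n\}$. A solution of $L(m,a)$ in $[n]$ is an $m$-tuple $(x_1,\dots,x_m)\in[n]^m$ (entries not necessarily distinct) satisfying the equation; given a 2-coloring of $[n]$, it is monochromatic if all $x_i$ have the same color. $C(m,a)$ denotes $\left\lceil \frac{m-1}{a}\left\lceil \frac{m-1}{a}\right\rceil\right\rceil$. *)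

(* Defs.v *)
From mathcomp Require Import all_boot.
Unset Printing Implicit Defensive.

Definition ceil_div (p q : nat) : nat := (p + q - 1) %/ q.

Definition Cma (m a : nat) : nat := ceil_div ((m - 1) * ceil_div (m - 1) a) a.

(* A solution of L(m,a) in [n]: an m-tuple (x_1..x_m) encoded as x : 'I_m -> nat,
   x_i = x (i-1); the last entry x_m is the ordinal m-1. *)
Definition is_solution (m a n : nat) (x : 'I_m -> nat) : Prop :=
  (forall i : 'I_m, 1 <= x i <= n) /\
  exists Hm : m.-1 < m,
    \sum_(i < m | (i : nat) != m.-1) x i = a * x (Ordinal Hm).

(* a 2-colouring of [n] is col : nat -> bool (true = red, false = blue);
   only its values on [n] matter. *)
Definition monochromatic (m : nat) (col : nat -> bool) (x : 'I_m -> nat) : Prop :=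
  forall i j : 'I_m, col (x i) = col (x j).

Definition no_mono_solution (m a n : nat) (col : nat -> bool) : Prop :=
  forall x : 'I_m -> nat, is_solution m a n x -> ~ monochromatic m col x.

(* Main.v *)
Require Import Defs.
From mathcomp Require Import all_boot.
From mathcomp Require Import zify.

Lemma sum_pw (k r p y u v : nat) : r + p <= k ->
  \sum_(i < k) (if i < r then y else if i < r + p then u else v)
  = r * y + p * u + (k - r - p) * v.
Proof.
move=> H.
rewrite -(big_mkord xpredT (fun i => if i < r then y else if i < r + p then u else v)).
rewrite (big_cat_nat _ (n:=r)) //=; last by lia.
rewrite (big_cat_nat _ (m:=r) (n:=r+p)) //=; last by lia.
rewrite (eq_big_nat _ _ (F2 := fun _ => y)); last by move=> i /andP[_ ->].
rewrite (eq_big_nat _ _ (F1 := fun i => if i < r then y else if i < r + p then u else v) (F2 := fun _ => u)); last first.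
  by move=> i /andP[H1 H2]; rewrite ltnNge H1 /= H2.
rewrite (eq_big_nat _ _ (F1 := fun i => if i < r then y else if i < r + p then u else v) (F2 := fun _ => v)); last first.
  move=> i /andP[H1 H2]; have -> : (i < r) = false by lia.
  by have -> : (i < r + p) = false by lia.
rewrite !sum_nat_const_nat. lia.
Qed.

Lemma mk_sol m a n col y u v r p :
  1 < m -> r + p <= m.-1 -> r * y + p * u + (m.-1 - r - p) * v = a * y ->
  1 <= y <= n -> 1 <= u <= n -> 1 <= v <= n -> no_mono_solution m a n col ->
  col y = col u -> col u = col v -> False.
Proof.
move=> Hm Hrp Hs Hy Hu Hv Hno Hyu Huv.
pose g i := if i < r then y else if i < r + p then u else if i < m.-1 then v else y.
apply: (Hno (fun i : 'I_m => g (val i))).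
- split.
  + move=> i; rewrite /g; by repeat case: ifP.
  + have Hm' : m.-1 < m by lia.
    exists Hm'.
    rewrite /g /= ltnn.
    have -> : (m.-1 < r) = false by lia.
    have -> : (m.-1 < r + p) = false by lia.
    rewrite -Hs -(sum_pw _ _ _ y u v Hrp).
    clear g; case: m Hm Hm' Hrp Hs Hno => [|k] //= Hm Hm' Hrp Hs Hno.
    rewrite big_mkcond big_ord_recr /= eqxx addn0.
    apply: eq_bigr => i _.
    rewrite /= (ltn_eqF (ltn_ord i)) /= ltn_ord.
    by case: ifP => //; case: ifP.
- move=> i j; rewrite /g.
  have E : forall t, col (if t < r then y else if t < r + p then u else if t < m.-1 then v else y) = col y.
    move=> t; repeat case: ifP => //; by rewrite Hyu Huv.
  by rewrite !E.
Qed.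


Lemma eq1 m a : 3 <= a -> 2 * a ^ 2 - a + 2 <= m ->
  2 * (m - 1) + (m - 2 * a + 1) * (a - 2) + (m - 1 - 2 - (m - 2 * a + 1)) * (a - 1) = a * (m - 1).
Proof.
move=> Ha Hm. rewrite expnS expn1 in Hm. have : 3 * a <= a * a by nia. move=> Haa.
have -> : m - 1 - 2 - (m - 2 * a + 1) = 2 * a - 4 by lia.
have [k ->] : exists k, m = k + 2 * a by exists (m - 2*a); lia.
have [b ->] : exists b, a = b + 3 by exists (a - 3); lia.
have -> : k + 2 * (b + 3) - 2 * (b + 3) + 1 = k + 1 by lia.
have -> : k + 2 * (b + 3) - 1 = k + 2 * b + 5 by lia.
have -> : 2 * (b + 3) - 4 = 2 * b + 2 by lia.
have -> : b + 3 - 2 = b + 1 by lia.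
have -> : b + 3 - 1 = b + 2 by lia.
nia.
Qed.

Lemma eq2 m a : 3 <= a -> 2 * a <= m ->
  2 * (m - 2) + (m - a - 1) * (a - 2) + (m - 1 - 2 - (m - a - 1)) * (a - 1) = a * (m - 2).
Proof.
move=> Ha Hm.
have -> : m - 1 - 2 - (m - a - 1) = a - 2 by lia.
have [k ->] : exists k, m = k + 2 * a by exists (m - 2*a); lia.
have [b ->] : exists b, a = b + 3 by exists (a - 3); lia.
have -> : k + 2 * (b + 3) - 2 = k + 2 * b + 4 by lia.
have -> : k + 2 * (b + 3) - (b + 3) - 1 = k + b + 2 by lia.
have -> : b + 3 - 2 = b + 1 by lia.
have -> : b + 3 - 1 = b + 2 by lia.
nia.
Qed.

Lemma eq3 m a : 3 <= a -> 2 * a <= m ->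
  2 * (m - 3) + (m - 3) * (a - 2) + (m - 1 - 2 - (m - 3)) * (a - 1) = a * (m - 3).
Proof.
move=> Ha Hm.
have -> : m - 1 - 2 - (m - 3) = 0 by lia.
have [k ->] : exists k, m = k + 3 by exists (m - 3); lia.
have [b ->] : exists b, a = b + 2 by exists (a - 2); lia.
have -> : k + 3 - 3 = k by lia.
have -> : b + 2 - 2 = b by lia.
nia.
Qed.

Lemma eq4 m a : 0 * (m - 1) + (m - 1) * a + (m - 1 - 0 - (m - 1)) * a = a * (m - 1).
Proof. have -> : m - 1 - 0 - (m - 1) = 0 by lia. by rewrite mul0n add0n addn0 mulnC. Qed.

Theorem lemma4 (m a : nat) (col : nat -> bool) :
  3 <= a ->
  2 * a ^ 2 - a + 2 <= m ->
  no_mono_solution m a (Cma m a) col ->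
  col (a - 2) = true -> col (a - 1) = true ->
  [/\ col (m - 1) = false, col (m - 2) = false, col (m - 3) = false
    & col a = true].
Proof.
move=> Ha Hm Hno H2 H1.
have Ha2 : a * a <= m - 1 by rewrite expnS expn1 in Hm; nia.
have H2a : 2 * a <= m by nia.
have Hn : m - 1 <= Cma m a.
  rewrite /Cma /ceil_div.
  have Hc : a <= (m - 1 + a - 1) %/ a.
    rewrite leq_divRL; lia.
  rewrite leq_divRL; last lia.
  have : (m - 1) * a <= (m - 1) * ((m - 1 + a - 1) %/ a) by rewrite leq_mul2l Hc orbT.
  lia.
have Hm1 : m.-1 = m - 1 by lia.
have Hmk : 1 < m by lia.
have Hm1f : col (m - 1) = false.
  case E: (col (m - 1)) => //; exfalso.
  apply: (mk_sol m a (Cma m a) col (m - 1) (a - 2) (a - 1) 2 (m - 2 * a + 1) Hmk).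
  - lia.
  - rewrite Hm1; exact: eq1.
  - lia.
  - lia.
  - lia.
  - exact: Hno.
  - by rewrite E H2.
  - by rewrite H2 H1.
split => //.
- case E: (col (m - 2)) => //; exfalso.
  apply: (mk_sol m a (Cma m a) col (m - 2) (a - 2) (a - 1) 2 (m - a - 1) Hmk).
  + lia.
  + rewrite Hm1; exact: eq2.
  + lia.
  + lia.
  + lia.
  + exact: Hno.
  + by rewrite E H2.
  + by rewrite H2 H1.
- case E: (col (m - 3)) => //; exfalso.
  apply: (mk_sol m a (Cma m a) col (m - 3) (a - 2) (a - 1) 2 (m - 3) Hmk).
  + lia.
  + rewrite Hm1; exact: eq3.
  + lia.
  + lia.
  + lia.
  + exact: Hno.
  + by rewrite E H2.
  + by rewrite H2 H1.
- case E: (col a) => //; exfalso.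
  apply: (mk_sol m a (Cma m a) col (m - 1) a a 0 (m - 1) Hmk).
  + lia.
  + rewrite Hm1; exact: eq4.
  + lia.
  + lia.
  + lia.
  + exact: Hno.
  + by rewrite E Hm1f.
  + by [].
Qed.
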